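(* Let $(a,b,c)\in\mathcal{I}:=\{(a,b,c)\in[0,1]^3 : a\le b,\ c\le b\}$. Then $(a',b',c'):=\varphi(a,b,c)\in\mathcal{I}$ and $\psi(\mathcal{S}_{a,b,c})\subset\mathcal{S}_{a',b',c'}$, where $$\varphi(a,b,c):=\left(\Big(\frac{1+b}{1+2b}\Big)^d,\ \Big(\frac{1+a+ac}{1+2a}\Big)^d,\ b^d\Big(\frac{1+c+c^2}{1+b+bc}\Big)^d\right).$$
   Context: Fix an integer $d\ge2$. For a probability distribution $z=(z_i)_{i\in\mathbb{Z}}$ on $\mathbb{Z}$ set $A(z)_i=(z_{i-1}+z_i+z_{i+1})^d$ and $F(z)=A(z)/\sum_{i\in\mathbb{Z}}A(z)_i$. Let $\mathcal{E}$ be the set of probability distributions $z$ on $\mathbb{Z}$ that are symmetric ($z_i=z_{-i}$) and whose support is an interval of $\mathbb{Z}$ or all of $\mathbb{Z}$. Define $\mathsf R\colon\mathcal{E}\to[0,\infty)^{\{1,2,\dots\}}$ by $\mathsf R(z)_i=z_i/z_{i-1}$ if $z_{i-1}\neq0$ and $\mathsf R(z)_i=0$ otherwise ($i\ge1$); $\mathsf R$ is injective on $\mathcal{E}$, and $\mathcal{R}:=\mathsf R(\mathcal{E})$. $F$ maps $\mathcal{E}$ to $\mathcal{E}$, and $\psi:=\mathsf R\circ F\circ\mathsf R^{-1}\colon\mathcal{R}\to\mathcal{R}$. Explicitly, writing $\psi_n(x)=\psi(x)_n$: $\psi_1(x)=\big(\frac{1+x_1+x_1x_2}{1+2x_1}\big)^d$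 and $\psi_n(x)=x_{n-1}^d\big(\frac{1+x_n+x_nx_{n+1}}{1+x_{n-1}+x_{n-1}x_n}\big)^d$ for $n\ge2$. For reals $a,b,c$, $\mathcal{S}_{a,b,c}:=\{x\in\mathcal{R}: a\le x_1\le b,\ 0\le x_n\le c\text{ for all }n\ge2\}$. *)

(* Defs.v *)
From Stdlib Require Import Reals Lra ZArith.
From Coquelicot Require Import Coquelicot.
Open Scope R_scope.

(* A probability distribution on Z: nonnegative weights summing to 1.
   For nonnegative terms, sum_{i in Z} z_i = z_0 + sum_{n>=1} (z_n + z_{-n}). *)
Definition is_prob_Z (z : Z -> R) : Prop :=
  (forall i, 0 <= z i) /\
  is_series (fun n : nat => if (n =? 0)%nat then z 0%Z
                            else z (Z.of_nat n) + z (- Z.of_nat n)%Z) 1.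

Definition symmetric_Z (z : Z -> R) : Prop := forall i, z i = z (- i)%Z.

Definition support_interval (z : Z -> R) : Prop :=
  forall i j k : Z, (i <= j <= k)%Z -> z i <> 0 -> z k <> 0 -> z j <> 0.

Definition inE (z : Z -> R) : Prop :=
  is_prob_Z z /\ symmetric_Z z /\ support_interval z.

(* Ratio map R : E -> [0,oo)^{1,2,...}.  Sequences indexed by {1,2,...} are
   represented as nat -> R, index 0 being a dummy coordinate fixed to 0. *)
Definition Rmap (z : Z -> R) : nat -> R := fun n =>
  match n with
  | O => 0
  | S _ => if Req_EM_T (z (Z.of_nat n - 1)%Z) 0 then 0
           else z (Z.of_nat n) / z (Z.of_nat n - 1)%Z
  end.

Definition inRR (x : nat -> R) : Prop := exists z, inE z /\ Rmap z = x.

(* psi = R o F o R^{-1}, in its explicit form *)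
Definition psi (d : nat) (x : nat -> R) : nat -> R := fun n =>
  match n with
  | O => 0
  | 1%nat => ((1 + x 1%nat + x 1%nat * x 2%nat) / (1 + 2 * x 1%nat)) ^ d
  | S m => x m ^ d *
           ((1 + x n + x n * x (S n)) / (1 + x m + x m * x n)) ^ d
  end.

Definition inS (a b c : R) (x : nat -> R) : Prop :=
  inRR x /\ a <= x 1%nat <= b /\ (forall n, (2 <= n)%nat -> 0 <= x n <= c).

Definition inI (a b c : R) : Prop :=
  0 <= a <= 1 /\ 0 <= b <= 1 /\ 0 <= c <= 1 /\ a <= b /\ c <= b.

Definition phi1 (d : nat) (a b c : R) : R := ((1 + b) / (1 + 2 * b)) ^ d.
Definition phi2 (d : nat) (a b c : R) : R := ((1 + a + a * c) / (1 + 2 * a)) ^ d.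
Definition phi3 (d : nat) (a b c : R) : R :=
  b ^ d * ((1 + c + c ^ 2) / (1 + b + b * c)) ^ d.

(* Main.v *)
Require Import Defs.
From Stdlib Require Import Reals Lra Lia ZArith FunctionalExtensionality.
From Coquelicot Require Import Coquelicot.
Open Scope R_scope.

Lemma div_le (p q r s : R) : 0 < q -> 0 < s -> p * s <= r * q -> p / q <= r / s.
Proof.
  intros Hq Hs H. apply Rmult_le_reg_r with (q * s). nra.
  replace (p / q * (q * s)) with (p * s) by (field; lra).
  replace (r / s * (q * s)) with (r * q) by (field; lra). lra.
Qed.

Lemma div_nonneg (p q : R) : 0 <= p -> 0 < q -> 0 <= p / q.
Proof. intros. unfold Rdiv. apply Rmult_le_pos; auto. left; apply Rinv_0_lt_compat; auto. Qed.

Lemma pow_le_one (x : R) (n : nat) : 0 <= x <= 1 -> x ^ n <= 1.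
Proof. intros H. rewrite <- (pow1 n). apply pow_incr. lra. Qed.

Lemma P1lo (b t s : R) : 0 <= t <= b -> 0 <= s -> (1 + b) / (1 + 2 * b) <= (1 + t + t * s) / (1 + 2 * t).
Proof. intros. apply div_le; try lra. assert (0 <= t * s * (1 + 2 * b)) by (apply Rmult_le_pos; [apply Rmult_le_pos|]; lra). nra. Qed.

Lemma P1hi (a t s c : R) : 0 <= a <= t -> 0 <= s <= c -> c <= 1 ->
  (1 + t + t * s) / (1 + 2 * t) <= (1 + a + a * c) / (1 + 2 * a).
Proof. intros. apply div_le; try lra.
  assert (0 <= (t - a) * (1 - s)) by (apply Rmult_le_pos; lra). assert (0 <= a * (c - s)) by (apply Rmult_le_pos; lra).
  assert (0 <= a * t * (c - s)) by (apply Rmult_le_pos; nra). nra. Qed.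

Lemma P2 (b c t s r : R) : 0 <= t <= b -> 0 <= s <= c -> 0 <= r <= c -> c <= 1 ->
  t * ((1 + s + s * r) / (1 + t + t * s)) <= b * ((1 + c + c * c) / (1 + b + b * c)).
Proof. intros.
  apply Rle_trans with (b * ((1 + s + s * c) / (1 + b + b * s))).
  - replace (t * ((1 + s + s * r) / (1 + t + t * s))) with ((t * (1 + s + s * r)) / (1 + t + t * s)) by (field; nra).
    replace (b * ((1 + s + s * c) / (1 + b + b * s))) with ((b * (1 + s + s * c)) / (1 + b + b * s)) by (field; nra).
    apply div_le; try nra.
    assert (K1 : t * (1 + b + b * s) <= b * (1 + t + t * s)) by nra.
    assert (K2 : 1 + s + s * r <= 1 + s + s * c) by nra.
    assert (K3 : t * (1 + b + b * s) * (1 + s + s * r) <= b * (1 + t + t * s) * (1 + s + s * c)).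
    { apply Rmult_le_compat; [apply Rmult_le_pos; nra|nra|exact K1|exact K2]. }
    nra.
  - apply Rmult_le_compat_l; try lra. apply div_le; try nra.
    assert (0 <= (c - s) * (1 + c + b * c)) by (apply Rmult_le_pos; nra). nra.
Qed.

Lemma phiI (d : nat) (a b c : R) : inI a b c -> inI (phi1 d a b c) (phi2 d a b c) (phi3 d a b c).
Proof.
  intros (Ha & Hb & Hc & Hab & Hcb). unfold inI, phi1, phi2, phi3.
  assert (E1 : 0 <= (1 + b) / (1 + 2 * b) <= 1) by (split; [apply div_nonneg; lra | apply Rle_trans with (1/1); [apply div_le; lra | lra]]).
  assert (E2 : 0 <= (1 + a + a * c) / (1 + 2 * a) <= 1) by (split; [apply div_nonneg; nra | apply Rle_trans with (1/1); [apply div_le; nra | lra]]).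
  assert (E3 : (1 + b) / (1 + 2 * b) <= (1 + a + a * c) / (1 + 2 * a)).
  { apply Rle_trans with ((1 + a + a * 0) / (1 + 2 * a)). apply P1lo; lra.
    apply div_le; nra. }
  assert (E4 : 0 <= b * ((1 + c + c * c) / (1 + b + b * c)) <= (1 + a + a * c) / (1 + 2 * a)).
  { split. apply Rmult_le_pos; [lra | apply div_nonneg; nra].
    apply Rle_trans with ((1 + b + b * c) / (1 + 2 * b)).
    - replace (b * ((1 + c + c * c) / (1 + b + b * c))) with ((b * (1 + c + c * c)) / (1 + b + b * c)) by (field; nra).
      apply div_le; try nra.
      assert (HB : 0 <= b * c <= 1) by (split; [apply Rmult_le_pos; lra | nra]). assert (0 <= 1 - b * c * (b * c)) by nra. assert (0 <= b * (1 - b)) by (apply Rmult_le_pos; lra).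
      assert (0 <= b * c * (1 - c)) by (apply Rmult_le_pos; nra). nra.
    - apply P1hi; lra. }
  replace (b ^ d * ((1 + c + c ^ 2) / (1 + b + b * c)) ^ d) with ((b * ((1 + c + c * c) / (1 + b + b * c))) ^ d)
    by (rewrite Rpow_mult_distr; f_equal; f_equal; f_equal; ring).
  repeat split.
  all: first [apply pow_le; lra | apply pow_le_one; lra | apply pow_incr; lra | idtac].
Qed.

Lemma psi_bounds (d : nat) (a b c : R) (x : nat -> R) : inI a b c ->
  a <= x 1%nat <= b -> (forall n, (2 <= n)%nat -> 0 <= x n <= c) ->
  phi1 d a b c <= psi d x 1%nat <= phi2 d a b c /\
  (forall n, (2 <= n)%nat -> 0 <= psi d x n <= phi3 d a b c).
Proof.
  intros (Ha & Hb & Hc & Hab & Hcb) H1 H2.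
  assert (X2 := H2 2%nat ltac:(lia)).
  split.
  - unfold phi1, phi2. change (psi d x 1%nat) with (((1 + x 1%nat + x 1%nat * x 2%nat) / (1 + 2 * x 1%nat)) ^ d).
    split; apply pow_incr; split.
    + apply div_nonneg; lra.
    + apply P1lo; lra.
    + apply div_nonneg; nra.
    + apply P1hi with (c := c); lra.
  - intros n Hn. destruct n as [|[|k]]; try lia.
    change (psi d x (S (S k))) with (x (S k) ^ d *
           ((1 + x (S (S k)) + x (S (S k)) * x (S (S (S k)))) / (1 + x (S k) + x (S k) * x (S (S k)))) ^ d).
    assert (T : 0 <= x (S k) <= b).
    { destruct k. lra. assert (H := H2 (S (S k)) ltac:(lia)). lra. }
    assert (S1 := H2 (S (S k)) ltac:(lia)). assert (S2 := H2 (S (S (S k))) ltac:(lia)).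
    rewrite <- Rpow_mult_distr. unfold phi3.
    replace (b ^ d * ((1 + c + c ^ 2) / (1 + b + b * c)) ^ d) with ((b * ((1 + c + c * c) / (1 + b + b * c))) ^ d)
      by (rewrite Rpow_mult_distr; f_equal; f_equal; f_equal; ring).
    split. apply pow_le. apply Rmult_le_pos; [lra | apply div_nonneg; nra].
    apply pow_incr. split. apply Rmult_le_pos; [lra | apply div_nonneg; nra].
    apply P2; lra.
Qed.

Definition pz (z : Z -> R) : nat -> R := fun n : nat => if (n =? 0)%nat then z 0%Z
                            else z (Z.of_nat n) + z (- Z.of_nat n)%Z.
Definition Aof (d : nat) (z : Z -> R) (i : Z) : R := (z (i - 1)%Z + z i + z (i + 1)%Z) ^ d.
Definition Fof (d : nat) (z : Z -> R) (i : Z) : R := Aof d z i / Series (pz (Aof d z)).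

Lemma term_le_series (a : nat -> R) l n : is_series a l -> (forall k, 0 <= a k) -> a n <= l.
Proof. intros H Hp. apply is_series_Reals in H. apply Rle_trans with (sum_f_R0 a n).
  destruct n; simpl. lra. assert (0 <= sum_f_R0 a n) by (apply cond_pos_sum; auto). specialize (Hp (S n)). lra.
  apply sum_incr; auto. Qed.

Section Z.
Variable z : Z -> R.
Hypothesis Hz : inE z.

Lemma z_nn i : 0 <= z i. Proof. destruct Hz as [[H _] _]. apply H. Qed.
Lemma z_sym i : z i = z (- i)%Z. Proof. destruct Hz as [_ [H _]]. apply H. Qed.
Lemma z_int i j k : (i <= j <= k)%Z -> z i <> 0 -> z k <> 0 -> z j <> 0.
Proof. destruct Hz as [_ [_ H]]. apply H. Qed.
Lemma z_ser : is_series (pz z) 1. Proof. destruct Hz as [[_ H] _]. exact H. Qed.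
Lemma pz_nn n : 0 <= pz z n.
Proof. unfold pz. destruct (n =? 0)%nat. apply z_nn. generalize (z_nn (Z.of_nat n)) (z_nn (- Z.of_nat n)); lra. Qed.

Lemma z_abs i : z i = z (Z.of_nat (Z.abs_nat i)).
Proof. rewrite Zabs2Nat.id_abs. destruct (Z.abs_spec i) as [[_ ->]|[_ ->]]. auto. apply z_sym. Qed.

Lemma z_le1 i : z i <= 1.
Proof. rewrite z_abs. set (n := Z.abs_nat i).
  apply Rle_trans with (pz z n). unfold pz. destruct (n =? 0)%nat eqn:E.
  apply Nat.eqb_eq in E. rewrite E. simpl. lra. generalize (z_nn (- Z.of_nat n)); lra.
  apply term_le_series with (1 := z_ser). apply pz_nn. Qed.

Lemma z0_pos : 0 < z 0%Z.
Proof. destruct (Req_dec (z 0%Z) 0) as [E|E]; [|generalize (z_nn 0%Z); lra].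
  exfalso. assert (Hall : forall i, z i = 0).
  { intros i. destruct (Req_dec (z i) 0) as [|N]; auto. exfalso.
    destruct (Z_le_gt_dec i 0).
    - exact (z_int i 0 (- i) ltac:(lia) N ltac:(rewrite <- z_sym; auto) E).
    - exact (z_int (- i) 0 i ltac:(lia) ltac:(rewrite <- z_sym; auto) N E). }
  assert (H := z_ser). apply is_series_unique in H.
  rewrite (Series_ext _ (fun n => 0 * 0)) in H. 
  2:{ intros n. unfold pz. destruct (n =? 0)%nat; rewrite !Hall; ring. }
  rewrite Series_scal_l in H. lra.
Qed.

Lemma z_tail (n k : nat) : z (Z.of_nat n) = 0 -> (n <= k)%nat -> z (Z.of_nat k) = 0.
Proof. intros H Hk. destruct (Req_dec (z (Z.of_nat k)) 0) as [|N]; auto. exfalso.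
  apply (z_int 0 (Z.of_nat n) (Z.of_nat k)); auto. lia. generalize z0_pos; lra. Qed.


Variable d : nat.
Hypothesis Hd : (2 <= d)%nat.

Lemma A_nn i : 0 <= Aof d z i.
Proof. unfold Aof. apply pow_le. generalize (z_nn (i-1)) (z_nn i) (z_nn (i+1)); lra. Qed.

Lemma A_sym i : Aof d z (- i) = Aof d z i.
Proof. unfold Aof. rewrite (z_sym (- i - 1)), (z_sym (- i)), (z_sym (- i + 1)).
  replace (- (- i - 1))%Z with (i + 1)%Z by lia. replace (- (- i + 1))%Z with (i - 1)%Z by lia.
  replace (- - i)%Z with i by lia. f_equal. ring. Qed.

Lemma A_zero i : Aof d z i = 0 <-> (z (i - 1) = 0 /\ z i = 0 /\ z (i + 1) = 0).
Proof. unfold Aof. generalize (z_nn (i-1)) (z_nn i) (z_nn (i+1)); intros.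
  split.
  - intros HA. destruct (Req_dec (z (i - 1)%Z + z i + z (i + 1)%Z) 0) as [E|E].
    lra. exfalso. apply (pow_nonzero _ d E). auto.
  - intros (-> & -> & ->). replace (0 + 0 + 0) with 0 by ring. apply pow_i. lia. Qed.

Lemma pow_le_lin (s : R) (k : nat) : 0 <= s <= 3 -> s ^ (S k) <= 3 ^ k * s.
Proof. intros H. simpl. rewrite Rmult_comm. apply Rmult_le_compat_r. lra. apply pow_incr. lra. Qed.

Let w := fun n : nat => z (Z.of_nat n).

Lemma ex_w : ex_series w.
Proof. apply (@ex_series_le R_AbsRing R_CompleteNormedModule) with (pz z). intros n. change (norm (w n)) with (Rabs (w n)).
  rewrite Rabs_pos_eq by apply z_nn. unfold w, pz. destruct (n =? 0)%nat eqn:E.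
  apply Nat.eqb_eq in E. rewrite E. simpl. lra. generalize (z_nn (- Z.of_nat n)); lra.
  exists 1. apply z_ser. Qed.

Lemma ex_pzA : ex_series (pz (Aof d z)).
Proof.
  assert (Ed : d = S (pred d)) by lia. set (k := pred d) in Ed.
  set (C := 2 * 3 ^ k).
  apply (@ex_series_le R_AbsRing R_CompleteNormedModule) with (fun n => C * (w (pred n) + w n + w (S n) + w (S n))).
  - intros n. change (norm (pz (Aof d z) n)) with (Rabs (pz (Aof d z) n)).
    assert (Hn : 0 <= pz (Aof d z) n).
    { unfold pz. destruct (n =? 0)%nat. apply A_nn. generalize (A_nn (Z.of_nat n)) (A_nn (- Z.of_nat n)); lra. }
    rewrite Rabs_pos_eq by exact Hn.
    assert (B : Aof d z (Z.of_nat n) <= 3 ^ k * (w (pred n) + w n + w (S n) + w (S n))).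
    { unfold Aof. rewrite Ed. apply Rle_trans with (3 ^ k * (z (Z.of_nat n - 1)%Z + z (Z.of_nat n) + z (Z.of_nat n + 1)%Z)).
      apply pow_le_lin. generalize (z_nn (Z.of_nat n-1)) (z_nn (Z.of_nat n)) (z_nn (Z.of_nat n+1)) (z_le1 (Z.of_nat n-1)) (z_le1 (Z.of_nat n)) (z_le1 (Z.of_nat n+1)); lra.
      apply Rmult_le_compat_l. apply pow_le; lra.
      unfold w. replace (Z.of_nat n + 1)%Z with (Z.of_nat (S n)) by lia.
      assert (z (Z.of_nat n - 1)%Z <= z (Z.of_nat (pred n)) + z (Z.of_nat (S n))).
      { destruct n. simpl. rewrite (z_sym (-1)). simpl. generalize (z_nn 0%Z). lra.
        replace (Z.of_nat (S n) - 1)%Z with (Z.of_nat n) by lia. simpl pred. generalize (z_nn (Z.of_nat (S (S n)))); lra. }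
      lra. }
    assert (pz (Aof d z) n <= 2 * Aof d z (Z.of_nat n)).
    { unfold pz. destruct (n =? 0)%nat eqn:E. apply Nat.eqb_eq in E. subst n. simpl.
      generalize (A_nn 0%Z). lra.
      rewrite A_sym. lra. }
    unfold C. lra.
  - apply ex_series_ext with (fun n => scal C (plus (plus (plus (w (pred n)) (w n)) (w (S n))) (w (S n)))).
    intros n. reflexivity.
    apply (@ex_series_scal R_AbsRing R_NormedModule).
    assert (E1 : ex_series (fun n => w (S n))) by (apply (@ex_series_incr_1 R_AbsRing R_NormedModule w); apply ex_w).
    assert (E0 : ex_series (fun n => w (pred n))) by (apply (@ex_series_incr_1 R_AbsRing R_NormedModule (fun n => w (pred n))); apply ex_w).
    apply (@ex_series_plus R_AbsRing R_NormedModule); auto.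
    apply (@ex_series_plus R_AbsRing R_NormedModule); auto.
    apply (@ex_series_plus R_AbsRing R_NormedModule); auto. apply ex_w.
Qed.

Let Ssum := Series (pz (Aof d z)).

Lemma S_ser : is_series (pz (Aof d z)) Ssum.
Proof. apply Series_correct. apply ex_pzA. Qed.

Lemma A0_pos : 0 < Aof d z 0.
Proof. unfold Aof. apply pow_lt. generalize (z_nn (0-1)) (z0_pos) (z_nn (0+1)); lra. Qed.

Lemma S_pos : 0 < Ssum.
Proof. apply Rlt_le_trans with (pz (Aof d z) 0). apply A0_pos.
  apply term_le_series with (1 := S_ser). intros n. unfold pz. destruct (n =? 0)%nat. apply A_nn.
  generalize (A_nn (Z.of_nat n)) (A_nn (- Z.of_nat n)); lra. Qed.

Lemma F_inE : inE (Fof d z).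
Proof.
  assert (SP := S_pos). unfold Fof. fold Ssum.
  split; [split|split].
  - intros i. apply div_nonneg. apply A_nn. auto.
  - assert (H := is_series_scal_r (/ Ssum) _ _ S_ser). replace (Ssum * / Ssum) with 1 in H by (field; lra). revert H.
    apply is_series_ext. intros n. unfold pz. destruct (n =? 0)%nat. reflexivity. exact (Rmult_plus_distr_r _ _ _).
  - intros i. rewrite A_sym. reflexivity.
  - intros i j k Hijk Hi Hk.
    assert (Ai : Aof d z i <> 0). { intros E. apply Hi. rewrite E. unfold Rdiv. ring. }
    assert (Ak : Aof d z k <> 0). { intros E. apply Hk. rewrite E. unfold Rdiv. ring. }
    assert (Aj : Aof d z j <> 0).
    { intros E. apply A_zero in E. destruct E as (E1 & E2 & E3).
      assert (exists p, (i - 1 <= p <= i + 1)%Z /\ z p <> 0) as [p [Hp Zp]].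
      { destruct (Req_dec (z (i-1)%Z) 0). destruct (Req_dec (z i) 0). destruct (Req_dec (z (i+1)%Z) 0).
        exfalso; apply Ai; apply A_zero; auto.
        exists (i+1)%Z; split; [lia|auto]. exists i; split; [lia|auto]. exists (i-1)%Z; split; [lia|auto]. }
      assert (exists q, (k - 1 <= q <= k + 1)%Z /\ z q <> 0) as [q [Hq Zq]].
      { destruct (Req_dec (z (k-1)%Z) 0). destruct (Req_dec (z k) 0). destruct (Req_dec (z (k+1)%Z) 0).
        exfalso; apply Ak; apply A_zero; auto.
        exists (k+1)%Z; split; [lia|auto]. exists k; split; [lia|auto]. exists (k-1)%Z; split; [lia|auto]. }
      destruct (Z_le_gt_dec p j); destruct (Z_le_gt_dec j q).
      + exact (z_int p j q ltac:(lia) Zp Zq E2).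
      + replace q with (j - 1)%Z in Zq by lia. auto.
      + replace p with (j + 1)%Z in Zp by lia. auto.
      + replace p with (j + 1)%Z in Zp by lia. auto. }
    intros E. apply Aj. apply Rmult_eq_reg_r with (/ Ssum). rewrite Rmult_0_l. exact E.
    apply Rinv_neq_0_compat. lra.
Qed.

Lemma Rmap_S (f : Z -> R) m : Rmap f (S m) = if Req_EM_T (f (Z.of_nat m)) 0 then 0 else f (Z.of_nat (S m)) / f (Z.of_nat m).
Proof. unfold Rmap. replace (Z.of_nat (S m) - 1)%Z with (Z.of_nat m) by lia. reflexivity. Qed.

Lemma x_nz m : z (Z.of_nat m) <> 0 -> Rmap z (S m) = z (Z.of_nat (S m)) / z (Z.of_nat m).
Proof. intros H. rewrite Rmap_S. destruct Req_EM_T; tauto. Qed.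
Lemma x_z m : z (Z.of_nat m) = 0 -> Rmap z (S m) = 0.
Proof. intros H. rewrite Rmap_S. destruct Req_EM_T; tauto. Qed.

Lemma pow_div p q n : (p / q) ^ n = p ^ n / q ^ n.
Proof. unfold Rdiv. rewrite Rpow_mult_distr, pow_inv. reflexivity. Qed.

Lemma F_ratio a b : Aof d z b <> 0 -> Fof d z a / Fof d z b = Aof d z a / Aof d z b.
Proof. intros H. assert (SP := S_pos). unfold Fof. fold Ssum. field. split; [auto|lra]. Qed.

Lemma F_zero b : Fof d z b = 0 -> Aof d z b = 0.
Proof. intros H. assert (SP := S_pos). unfold Fof in H. fold Ssum in H.
  apply Rmult_eq_reg_r with (/ Ssum). rewrite Rmult_0_l. exact H. apply Rinv_neq_0_compat. lra. Qed.

Lemma A_nat k : Aof d z (Z.of_nat (S k)) = (z (Z.of_nat k) + z (Z.of_nat (S k)) + z (Z.of_nat (S (S k)))) ^ d.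
Proof. unfold Aof. replace (Z.of_nat (S k) - 1)%Z with (Z.of_nat k) by lia.
  replace (Z.of_nat (S k) + 1)%Z with (Z.of_nat (S (S k))) by lia. reflexivity. Qed.

Lemma Rmap_F : Rmap (Fof d z) = psi d (Rmap z).
Proof.
  assert (P0 := z0_pos). assert (Hd0 : (0 < d)%nat) by lia.
  extensionality n. destruct n as [|m]. reflexivity.
  rewrite Rmap_S. destruct m as [|k].
  - change (Z.of_nat 0) with 0%Z. change (Z.of_nat 1) with 1%Z.
    destruct Req_EM_T as [E|E].
    { apply F_zero in E. generalize A0_pos. lra. }
    rewrite F_ratio by (generalize A0_pos; lra).
    change (psi d (Rmap z) 1%nat) with (((1 + Rmap z 1%nat + Rmap z 1%nat * Rmap z 2%nat) / (1 + 2 * Rmap z 1%nat)) ^ d).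
    rewrite (x_nz 0) by (change (Z.of_nat 0) with 0%Z; lra).
    change (Z.of_nat 0) with 0%Z. change (Z.of_nat 1) with 1%Z.
    unfold Aof. change (1 - 1)%Z with 0%Z. change (1 + 1)%Z with 2%Z. change (0 - 1)%Z with (-1)%Z. change (0 + 1)%Z with 1%Z.
    rewrite (z_sym (-1)). change (- -1)%Z with 1%Z.
    rewrite <- pow_div. f_equal.
    assert (N1 := z_nn 1). assert (N2 := z_nn 2).
    destruct (Req_dec (z 1%Z) 0) as [E1|E1].
    + rewrite (x_z 1) by (change (Z.of_nat 1) with 1%Z; auto).
      assert (E2 : z 2%Z = 0) by (apply (z_tail 1 2); auto).
      rewrite E1, E2. field. lra.
    + rewrite (x_nz 1) by (change (Z.of_nat 1) with 1%Z; auto).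
      change (Z.of_nat 1) with 1%Z. change (Z.of_nat 2) with 2%Z.
      field. repeat split; lra.
  - change (psi d (Rmap z) (S (S k))) with (Rmap z (S k) ^ d *
           ((1 + Rmap z (S (S k)) + Rmap z (S (S k)) * Rmap z (S (S (S k)))) / (1 + Rmap z (S k) + Rmap z (S k) * Rmap z (S (S k)))) ^ d).
    set (u := z (Z.of_nat k)). set (v := z (Z.of_nat (S k))). set (w' := z (Z.of_nat (S (S k)))).
    set (y := z (Z.of_nat (S (S (S k))))).
    assert (Nu : 0 <= u) by apply z_nn. assert (Nv : 0 <= v) by apply z_nn.
    assert (Nw : 0 <= w') by apply z_nn. assert (Ny : 0 <= y) by apply z_nn.
    destruct (Req_dec u 0) as [Eu|Eu].
    + assert (Ev : v = 0) by (apply (z_tail k); auto).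
      assert (Ew : w' = 0) by (apply (z_tail k); auto).
      rewrite (x_z k) by auto. rewrite pow_i by auto. rewrite Rmult_0_l.
      destruct Req_EM_T as [E|E]; auto. exfalso. apply E.
      unfold Fof. rewrite A_nat. fold u v w'. rewrite Eu, Ev, Ew.
      replace (0 + 0 + 0) with 0 by ring. rewrite pow_i by auto. unfold Rdiv; ring.
    + assert (AS : Aof d z (Z.of_nat (S k)) <> 0).
      { rewrite A_nat. fold u v w'. apply pow_nonzero. lra. }
      destruct Req_EM_T as [E|E].
      { apply F_zero in E. contradiction. }
      rewrite F_ratio by auto. rewrite !A_nat. fold u v w' y.
      rewrite <- !pow_div, <- Rpow_mult_distr. f_equal.
      rewrite (x_nz k) by auto. fold u v.
      destruct (Req_dec v 0) as [Ev|Ev].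
      * assert (Ew : w' = 0) by (apply (z_tail (S k)); auto).
        assert (Ey : y = 0) by (apply (z_tail (S k)); auto).
        rewrite (x_z (S k)) by auto. rewrite Ev, Ew, Ey. field. lra.
      * rewrite (x_nz (S k)) by auto. fold v w'.
        destruct (Req_dec w' 0) as [Ew|Ew].
        -- assert (Ey : y = 0) by (apply (z_tail (S (S k))); auto).
           rewrite (x_z (S (S k))) by auto. rewrite Ew, Ey. field. lra.
        -- rewrite (x_nz (S (S k))) by auto. fold w' y. field. lra.
Qed.

End Z.

Theorem lemma2p2 (d : nat) (a b c : R) :
  (2 <= d)%nat -> inI a b c ->
  inI (phi1 d a b c) (phi2 d a b c) (phi3 d a b c) /\
  (forall x : nat -> R, inS a b c x ->
     inS (phi1 d a b c) (phi2 d a b c) (phi3 d a b c) (psi d x)).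
Proof.
  intros Hd HI. split. apply phiI; auto.
  intros x (HR & H1 & H2).
  destruct (psi_bounds d a b c x HI H1 H2) as [B1 B2].
  split; [|split; auto].
  destruct HR as [z [Hz Ex]]. exists (Fof d z). split.
  - eapply F_inE; eauto.
  - rewrite <- Ex. eapply Rmap_F; eauto.
Qed.
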